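(* Let $m,d \in \mathbb{N}$, let $A \in \mathbb{R}^{m\times d}$ with rows $a_1^\top,\dots,a_m^\top$ (so $a_i \in \mathbb{R}^d$), let $b=(b_1,\dots,b_m) \in \mathbb{R}^m$ and $c \in \mathbb{R}^d$. For $\hat{x} \in [0,1]^d$ let $P_{\hat{x}} := \bigotimes_{j=1}^d \mathrm{Bernoulli}(\hat{x}_j)$ be the product distribution on $\{0,1\}^d$ whose $j$-th coordinate equals $1$ with probability $\hat{x}_j$, independently across coordinates. Suppose there exists some $x \in \{0,1\}^d$ with $Ax \preccurlyeq b$. Define \[ \delta := \min\Big( \{1\} \cup \Big( \bigcup_{i=1}^m \{ a_i^\top x - b_i : x \in \{0,1\}^d \} \cap (0,\infty) \Big) \Big). \] Then for every $\mu > \dfrac{2\sqrt{d}\,\|c\|_2}{\delta}$, \[ \mathop{\arg\min}_{\hat{x} \in [0,1]^d} \Big( c^\top \hat{x} + \mu \sum_{i=1}^m \mathbb{E}_{x \sim P_{\hat{x}}}\big[\max\{a_i^\top x - b_i, 0\}\big] \Big) = \mathop{\arg\min}_{\hat{x} \in [0,1]^d:\ \sum_{i=1}^m \mathbb{E}_{x \sim P_{\hat{x}}}[\max\{a_i^\top x - b_i, 0\}] = 0} c^\top \hat{x}. \]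
   Context: $\preccurlyeq$ denotes componentwise inequality between vectors in $\mathbb{R}^m$. $\|c\|_2$ is the Euclidean norm. The left-hand side is the set of minimizers over the cube $[0,1]^d$ of the penalized objective; the right-hand side is the set of minimizers of $c^\top\hat{x}$ over those $\hat{x}\in[0,1]^d$ for which the total expected constraint violation is zero. *)

(* Defs.v *)
From HB Require Import structures.
From mathcomp Require Import all_boot all_order all_algebra.
From mathcomp Require Import classical_sets reals.
Set Implicit Arguments. Unset Strict Implicit. Unset Printing Implicit Defensive.
Import Order.TTheory GRing.Theory Num.Theory.
Local Open Scope ring_scope.
Local Open Scope classical_set_scope.

(* Points of {0,1}^d are boolean finite functions; coordinate j is (x j)%:R. *)
Definition bvec (d : nat) := {ffun 'I_d -> bool}.

Definition viol (R : realType) (m d : nat) (A : 'M[R]_(m, d)) (b : 'I_m -> R)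
  (i : 'I_m) (x : bvec d) : R :=
  \sum_(j < d) A i j * (x j)%:R - b i.

Definition bern_pmf (R : realType) (d : nat) (xh : 'I_d -> R) (x : bvec d) : R :=
  \prod_(j < d) (if x j then xh j else 1 - xh j).

Definition bern_exp (R : realType) (d : nat) (xh : 'I_d -> R) (f : bvec d -> R) : R :=
  \sum_(x : bvec d) bern_pmf xh x * f x.

Definition exp_violation (R : realType) (m d : nat) (A : 'M[R]_(m, d)) (b : 'I_m -> R)
  (xh : 'I_d -> R) : R :=
  \sum_(i < m) bern_exp xh (fun x => Num.max (viol A b i x) 0).

Definition delta (R : realType) (m d : nat) (A : 'M[R]_(m, d)) (b : 'I_m -> R) : R :=
  \big[Num.min/1]_(i < m) \big[Num.min/1]_(x : bvec d | 0 < viol A b i x) viol A b i x.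

Definition dot (R : realType) (d : nat) (c xh : 'I_d -> R) : R := \sum_(j < d) c j * xh j.

Definition norm2 (R : realType) (d : nat) (c : 'I_d -> R) : R :=
  Num.sqrt (\sum_(j < d) c j ^+ 2).

Definition cube (R : realType) (d : nat) : set ('I_d -> R) :=
  [set xh | forall j, 0 <= xh j <= 1].

Definition argmin (T : Type) (R : realType) (S : set T) (f : T -> R) : set T :=
  [set x | S x /\ forall y, S y -> f x <= f y].

(* Main.v *)
Require Import Defs.
From HB Require Import structures.
From mathcomp Require Import all_boot all_order all_algebra.
From mathcomp Require Import classical_sets reals.
From mathcomp Require Import ring lra.
Import Order.TTheory GRing.Theory Num.Theory.
Local Open Scope ring_scope.
Local Open Scope classical_set_scope.

Definition vtx (R : realType) (d : nat) (v : bvec d) : 'I_d -> R := fun j => (v j)%:R.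
Arguments vtx (R) {d}.

Lemma pmf_sum1 (R : realType) (d : nat) (xh : 'I_d -> R) :
  \sum_(x : bvec d) bern_pmf xh x = 1.
Proof.
rewrite /bern_pmf.
have := bigA_distr_bigA (fun j (bb : bool) => if bb then xh j else 1 - xh j).
move=> /= <-.
rewrite big1 // => j _; rewrite big_bool /=; ring.
Qed.

Lemma pmf_mean (R : realType) (d : nat) (xh : 'I_d -> R) (j : 'I_d) :
  \sum_(x : bvec d) bern_pmf xh x * (x j)%:R = xh j.
Proof.
pose F := fun i (bb : bool) =>
  (if bb then xh i else 1 - xh i) * (if i == j then (bb : nat)%:R else 1).
transitivity (\sum_(x : {ffun 'I_d -> bool}) \prod_(i < d) F i (x i)).
  apply: eq_bigr => x _; rewrite big_split /= /bern_pmf; congr (_ * _).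
  by rewrite (bigD1 j) //= eqxx big1 ?mulr1 // => i /negbTE ->.
transitivity (\prod_(i < d) \sum_(bb : bool) F i bb).
  by symmetry; apply: bigA_distr_bigA.
rewrite (bigD1 j) //= [X in _ * X]big1 ?mulr1.
  by rewrite big_bool /F /= eqxx; ring.
by move=> i /negbTE Hi; rewrite big_bool /F /= Hi; ring.
Qed.

Lemma pmf_vtx (R : realType) (d : nat) (v x : bvec d) :
  bern_pmf (vtx R v) x = (x == v)%:R.
Proof.
rewrite /bern_pmf /vtx; case: eqP => [->|].
  by rewrite big1 // => j _; case: (v j); rewrite /= ?subr0.
move=> Hne; have [j Hj] : exists j, x j != v j.
  apply/existsP; apply: contraT; rewrite negb_exists => /forallP H.
  exfalso; apply: Hne; apply/ffunP => j; apply/eqP; have := H j; by rewrite negbK.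
rewrite (bigD1 j) //=; move: Hj; case: (x j); case: (v j) => //= _;
  rewrite ?subrr ?mul0r //.
Qed.

Lemma exp_vtx (R : realType) (d : nat) (v : bvec d) (f : bvec d -> R) :
  bern_exp (vtx R v) f = f v.
Proof.
rewrite /bern_exp (bigD1 v) //= pmf_vtx eqxx mul1r big1 ?addr0 //.
by move=> x /negbTE; rewrite pmf_vtx => ->; rewrite mul0r.
Qed.

Definition G (R : realType) (m d : nat) (A : 'M[R]_(m, d)) (b : 'I_m -> R)
  (c : 'I_d -> R) (mu : R) (x : bvec d) : R :=
  dot c (vtx R x) + mu * \sum_(i < m) Num.max (viol A b i x) 0.
Arguments G {R m d}.

Lemma F_vtx (R : realType) (m d : nat) (A : 'M[R]_(m, d)) (b : 'I_m -> R)
  (c : 'I_d -> R) (mu : R) (x : bvec d) :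
  dot c (vtx R x) + mu * exp_violation A b (vtx R x) = G A b c mu x.
Proof.
rewrite /G /exp_violation; congr (_ + _ * _).
by apply: eq_bigr => i _; rewrite exp_vtx.
Qed.

Lemma F_mix (R : realType) (m d : nat) (A : 'M[R]_(m, d)) (b : 'I_m -> R)
  (c : 'I_d -> R) (mu : R) (xh : 'I_d -> R) :
  dot c xh + mu * exp_violation A b xh = \sum_(x : bvec d) bern_pmf xh x * G A b c mu x.
Proof.
rewrite /G; under eq_bigr => x _ do rewrite mulrDr.
rewrite big_split /=; congr (_ + _).
  rewrite /dot; under eq_bigr => x _ do rewrite big_distrr /=.
  rewrite exchange_big /=; apply: eq_bigr => j _.
  rewrite -(pmf_mean _ _ xh j) big_distrr /=; apply: eq_bigr => x _.
  by rewrite /vtx mulrCA.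
rewrite /exp_violation /bern_exp big_distrr /=.
under eq_bigr => i _ do rewrite big_distrr /=.
rewrite exchange_big /=; apply: eq_bigr => x _.
by rewrite mulrCA big_distrr /= [RHS]big_distrr.
Qed.

Lemma sq_sum_le (R : realType) (d : nat) (a : 'I_d -> R) :
  (\sum_(j < d) a j) ^+ 2 <= d%:R * \sum_(j < d) a j ^+ 2.
Proof.
have E (x : R) : \sum_(i < d) x = x *+ d by rewrite sumr_const card_ord.
set S := \sum_(j < d) a j ^+ 2.
have H1 : \sum_(j < d) \sum_(k < d) (a j ^+ 2 + a k ^+ 2) = 2 * (d%:R * S).
  transitivity (\sum_(j < d) (a j ^+ 2 *+ d + S)).
    by apply: eq_bigr => j _; rewrite big_split /= E.
  rewrite big_split /= sumrMnl E mulr_natl -/S -mulr2n. 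
  by rewrite mulr_natl.
have H2 : 2 * (\sum_(j < d) a j) ^+ 2 <= \sum_(j < d) \sum_(k < d) (a j ^+ 2 + a k ^+ 2).
  rewrite expr2 big_distrl /= big_distrr /=; apply: ler_sum => j _.
  rewrite big_distrr /= big_distrr /=; apply: ler_sum => k _.
  have := sqr_ge0 (a j - a k); rewrite sqrrB. lra.
lra.
Qed.

Lemma sum_abs_le (R : realType) (d : nat) (c : 'I_d -> R) :
  \sum_(j < d) `|c j| <= Num.sqrt (d%:R) * norm2 c.
Proof.
rewrite /norm2 -sqrtrM ?ler0n //.
have h0 : 0 <= \sum_(j < d) `|c j| by apply: sumr_ge0 => j _; exact: normr_ge0.
rewrite -[X in X <= _]ger0_norm // -sqrtr_sqr; apply: ler_wsqrtr.
have E : \sum_(j < d) `|c j| ^+ 2 = \sum_(j < d) c j ^+ 2.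
  by apply: eq_bigr => j _; rewrite real_normK ?num_real.
by rewrite -E; exact: (sq_sum_le _ _ (fun j => `|c j|)).
Qed.

Lemma cs_bound (R : realType) (d : nat) (c : 'I_d -> R) (v w : bvec d) :
  dot c (vtx R w) - dot c (vtx R v) <= Num.sqrt (d%:R) * norm2 c.
Proof.
apply: le_trans (sum_abs_le _ _ c).
rewrite /dot -sumrB; apply: ler_sum => j _; rewrite /vtx.
rewrite -mulrBr; apply: le_trans (ler_norm _) _; rewrite normrM.
apply: ler_piMr; first exact: normr_ge0.
by case: (w j); case: (v j); rewrite /= ?subrr ?normr0 ?subr0 ?sub0r ?normrN ?normr1.
Qed.

Lemma delta_gt0 (R : realType) (m d : nat) (A : 'M[R]_(m, d)) (b : 'I_m -> R) :
  0 < delta A b.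
Proof.
rewrite /delta; apply: (big_ind (fun x : R => 0 < x)) => //.
  by move=> x y hx hy; rewrite lt_min hx hy.
move=> i _; apply: (big_ind (fun x : R => 0 < x)) => //.
by move=> x y hx hy; rewrite lt_min hx hy.
Qed.

Lemma delta_le (R : realType) (m d : nat) (A : 'M[R]_(m, d)) (b : 'I_m -> R)
  (i : 'I_m) (v : bvec d) : 0 < viol A b i v -> delta A b <= viol A b i v.
Proof.
move=> hv; rewrite /delta (bigD1 i) //= ge_min (bigD1 v) //= ge_min lexx.
by [].
Qed.

Theorem theorem2 (R : realType) (m d : nat) (A : 'M[R]_(m, d)) (b : 'I_m -> R)
  (c : 'I_d -> R) :
  (exists x : bvec d, forall i : 'I_m, \sum_(j < d) A i j * (x j)%:R <= b i) ->
  forall mu : R, 2 * Num.sqrt (d%:R) * norm2 c / delta A b < mu ->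
  argmin (@cube R d) (fun xh => dot c xh + mu * exp_violation A b xh)
  = argmin (@cube R d `&` [set xh | exp_violation A b xh = 0]) (dot c).
Proof.
move=> [x0 Hx0] mu Hmu.
have K0 : 0 <= Num.sqrt (d%:R) * norm2 c by rewrite mulr_ge0 // /norm2 sqrtr_ge0.
have dpos := delta_gt0 _ _ _ A b.
have HK : Num.sqrt (d%:R) * norm2 c < mu * delta A b.
  move: Hmu; rewrite ltr_pdivrMr // => H; lra.
have mu0 : 0 < mu.
  have : 0 < mu * delta A b by lra.
  by rewrite pmulr_lgt0.
have sum_max0 : forall v, (forall i, viol A b i v <= 0) ->
    \sum_(i < m) Num.max (viol A b i v) 0 = 0.
  by move=> v hv; apply: big1 => i _; apply/max_idPr.
have Gfeas : forall v, (forall i, viol A b i v <= 0) -> G A b c mu v = dot c (vtx R v).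
  by move=> v hv; rewrite /G sum_max0 // mulr0 addr0.
have feas0 : forall i, viol A b i x0 <= 0 by move=> i; rewrite /viol subr_le0.
have Ginf : forall v i, 0 < viol A b i v -> G A b c mu x0 < G A b c mu v.
  move=> v i hv; rewrite Gfeas //.
  have hs : delta A b <= \sum_(i0 < m) Num.max (viol A b i0 v) 0.
    rewrite (bigD1 i) //=.
    have h0 := delta_le _ _ _ A b i v hv.
    have h1 : viol A b i v <= Num.max (viol A b i v) 0 by rewrite le_max lexx.
    have h2 : 0 <= \sum_(j < m | j != i) Num.max (viol A b j v) 0.
      by apply: sumr_ge0 => j _; rewrite le_max lexx orbT.
    lra.
  have hm : mu * delta A b <= mu * \sum_(i0 < m) Num.max (viol A b i0 v) 0.
    by rewrite ler_pM2l.
  have := cs_bound _ _ c v x0.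
  rewrite /G; lra.
have vcube : forall v : bvec d, cube (vtx R v).
  by move=> v j; rewrite /vtx; case: (v j); rewrite /= ?mulr1n ?mulr0n ?lexx ?ler01.
have pmf_ge0 : forall xh : 'I_d -> R, cube xh -> forall x : bvec d, 0 <= bern_pmf xh x.
  move=> xh hc x; rewrite /bern_pmf; apply: prodr_ge0 => j _; case/andP: (hc j) => h0 h1.
  by case: (x j) => //; rewrite subr_ge0.
have EV_vtx0 : forall v, (forall i, viol A b i v <= 0) ->
    exp_violation A b (vtx R v) = 0.
  move=> v hv; rewrite -[RHS](sum_max0 v hv) /exp_violation.
  by apply: eq_bigr => i _; rewrite exp_vtx.
rewrite eqEsubset; split.
- move=> xh [Hc Hmin].
  have Hm : forall y, cube y ->
      dot c xh + mu * exp_violation A b xh <= dot c y + mu * exp_violation A b y.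
    exact: Hmin.
  have EV0 : exp_violation A b xh = 0.
    apply/eqP; apply: contraT => hne.
    have HG : forall x, dot c xh + mu * exp_violation A b xh <= G A b c mu x.
      by move=> x; rewrite -F_vtx; exact: Hm (vcube x).
    have Hs : \sum_(x : bvec d) bern_pmf xh x *
        (G A b c mu x - (dot c xh + mu * exp_violation A b xh)) = 0.
      under eq_bigr => x _ do rewrite mulrBr.
      rewrite sumrB -big_distrl /= pmf_sum1 mul1r.
      by rewrite [X in _ - X]F_mix subrr.
    have Hnn : forall x : bvec d, true -> 0 <= bern_pmf xh x *
        (G A b c mu x - (dot c xh + mu * exp_violation A b xh)).
      by move=> x _; apply: mulr_ge0; [exact: pmf_ge0 | rewrite subr_ge0; exact: HG].
    have Hz := psumr_eq0P Hnn Hs.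
    have [x /existsP [i Hxi]] : exists x : bvec d,
        [exists i, bern_pmf xh x * Num.max (viol A b i x) 0 != 0].
      apply/existsP; apply: contraT; rewrite negb_exists => /forallP H.
      move: hne; rewrite /exp_violation big1 ?eqxx // => i _.
      rewrite /bern_exp big1 // => y _; move: (H y).
      by rewrite negb_exists => /forallP /(_ i); rewrite negbK => /eqP.
    move: Hxi; rewrite mulf_eq0 negb_or => /andP [hP hM].
    have hv : 0 < viol A b i x.
      rewrite ltNge; apply: contra hM => hle; apply/eqP/max_idPr; exact: hle.
    have := Hz x isT; move/eqP; rewrite mulf_eq0 (negbTE hP) /= subr_eq0 => /eqP hGx.
    have := Ginf x i hv; have := Hm (vtx R x0) (vcube x0); rewrite F_vtx.
    lra.
  split; first by split.
  move=> y [hy hy0]; have := Hm y hy; by rewrite EV0 hy0 !mulr0 !addr0.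
- move=> xh [[Hc HE] Hmin]; split => // y hy.
  rewrite HE mulr0 addr0 F_mix.
  have hG : forall x, dot c xh <= G A b c mu x.
    move=> x; case: (boolP [forall i, viol A b i x <= 0]) => [/forallP hf | /forallPn [i hi]].
      by rewrite Gfeas //; apply: Hmin; split; [exact: vcube | exact: EV_vtx0].
    rewrite -ltNge in hi.
    have := Ginf x i hi; rewrite Gfeas //.
    have := Hmin (vtx R x0) (conj (vcube x0) (EV_vtx0 x0 feas0)); lra.
  have -> : dot c xh = \sum_(x : bvec d) bern_pmf y x * dot c xh.
    by rewrite -big_distrl /= pmf_sum1 mul1r.
  apply: ler_sum => x _; apply: ler_wpM2l; [exact: pmf_ge0 | exact: hG].
Qed.
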